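(* Let $k,s,d$ be positive integers and let $\alpha,\beta\ge0$ be reals. For a sequence $e=(e_1,\dots,e_k)\in[s+1]^k$ define $c(i,j)=|\{\ell\le j: e_\ell=i\}|$ for $i\in[s+1]$, $j\in[k]$, and $$F^*(e)=\sum_{j=1}^k\min\Big\{\big(d-\max_{i\in[s+1]\setminus\{e_j\}}c(i,j)\big)\beta,\ \alpha\Big\}.$$ Then for every $e\in[s+1]^k$ there exists $e'\in[2]^k$ with $F^*(e')\le F^*(e)$ (where $F^*(e')$ is computed by the same formula, viewing $e'$ as an element of $[s+1]^k$).
   Context: $[a]=\{1,\dots,a\}$. *)

(* Defs.v *)
From HB Require Import structures.
From mathcomp Require Import all_boot all_order all_algebra.
From mathcomp Require Import reals.
Set Implicit Arguments. Unset Strict Implicit. Unset Printing Implicit Defensive.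
Import Order.TTheory GRing.Theory Num.Theory.
Local Open Scope ring_scope.

(* A sequence e in [s+1]^k is a map 'I_k -> 'I_(s.+1); value v : 'I_(s.+1)
   represents the element v+1 of [s+1], and index j : 'I_k represents j+1. *)

Definition cnt (k s : nat) (e : 'I_k -> 'I_s.+1) (i : 'I_s.+1) (j : 'I_k) : nat :=
  #|[set l : 'I_k | (l <= j)%N && (e l == i)]|.

Definition maxc (k s : nat) (e : 'I_k -> 'I_s.+1) (j : 'I_k) : nat :=
  (\max_(i : 'I_s.+1 | i != e j) cnt e i j)%N.

Definition Fstar (R : realType) (d : nat) (alpha beta : R)
  (k s : nat) (e : 'I_k -> 'I_s.+1) : R :=
  \sum_(j < k) Num.min ((d%:R - (maxc e j)%:R) * beta) alpha.

(* Main.v *)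
Require Import Defs.
From HB Require Import structures.
From mathcomp Require Import all_boot all_order all_algebra.
From mathcomp Require Import reals.
From mathcomp Require Import zify.
Set Implicit Arguments. Unset Strict Implicit. Unset Printing Implicit Defensive.
Import Order.TTheory GRing.Theory Num.Theory.

Definition Cn (k n : nat) (f : 'I_k.+1 -> 'I_n) (i : 'I_n) (j : nat) : nat :=
  (\sum_(0 <= l < j) (f (inord l) == i))%N.

Lemma CS k n (f : 'I_k.+1 -> 'I_n) i j :
  Cn f i j.+1 = (Cn f i j + (f (inord j) == i))%N.
Proof. by rewrite /Cn big_nat_recr. Qed.

Lemma cnt_C k n (f : 'I_k.+1 -> 'I_n.+1) i (j : 'I_k.+1) :
  cnt f i j = Cn f i j.+1.
Proof.
rewrite /cnt /Cn -sum1_card big_mkcond /= big_mkord.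
rewrite (big_ord_widen k.+1 (fun l => nat_of_bool (f (inord l) == i))) //.
rewrite [RHS]big_mkcond /=; apply: eq_bigr => l _.
by rewrite in_set inord_val ltnS; case: (_ <= _)%N; case: (_ == _).
Qed.

Definition top k s (e : 'I_k.+1 -> 'I_s.+2) (j : nat) : bool :=
  [forall i, (Cn e i j <= Cn e (e (inord j)) j)%N].

Fixpoint st k s (e : 'I_k.+1 -> 'I_s.+2) (j : nat) : nat * nat :=
  match j with
  | 0 => (0, 0)%N
  | j'.+1 => let p := st e j' in
     if (if top e j' then (p.1 < p.2)%N else (p.2 <= p.1)%N)
     then (p.1, p.2.+1) else (p.1.+1, p.2)
  end.

Definition bit k s (e : 'I_k.+1 -> 'I_s.+2) (j : nat) : bool :=
  let p := st e j in if top e j then (p.1 < p.2)%N else (p.2 <= p.1)%N.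

Definition o0 s : 'I_s.+2 := inord 0.
Definition o1 s : 'I_s.+2 := inord 1.

Lemma o0v s : nat_of_ord (o0 s) = 0%N. Proof. by rewrite /o0 inordK. Qed.
Lemma o1v s : nat_of_ord (o1 s) = 1%N. Proof. by rewrite /o1 inordK. Qed.

Definition e' k s (e : 'I_k.+1 -> 'I_s.+2) (j : 'I_k.+1) : 'I_s.+2 :=
  if bit e j then o1 s else o0 s.

Lemma stC k s (e : 'I_k.+1 -> 'I_s.+2) j : (j <= k.+1)%N ->
  Cn (e' e) (o0 s) j = (st e j).1 /\ Cn (e' e) (o1 s) j = (st e j).2.
Proof.
elim: j => [|j IH] hj; first by rewrite /Cn !big_geq.
have [I1 I2] := IH (ltnW hj).
rewrite !CS /e' inordK // I1 I2 /=.
rewrite -/(bit e j).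
have ne : (o1 s == o0 s) = false by apply/negbTE; apply/eqP => /(congr1 (@nat_of_ord _)); rewrite o0v o1v.
have ne' : (o0 s == o1 s) = false by rewrite eq_sym.
by case: (bit e j) => /=; rewrite eqxx ?ne ?ne' addn0 addn1.
Qed.

Definition Inv k s (e : 'I_k.+1 -> 'I_s.+2) (j : nat) : Prop :=
  (forall i, Cn e i j <= maxn (st e j).1 (st e j).2)%N /\
  (forall i i', i != i' -> minn (Cn e i j) (Cn e i' j) <= minn (st e j).1 (st e j).2)%N.

Lemma inv_all k s (e : 'I_k.+1 -> 'I_s.+2) j : Inv e j.
Proof.
elim: j => [|j [H1 H2]].
  by rewrite /Inv; split => [i|i i' _]; rewrite /Cn !big_geq.
set x := e (inord j).
have Cx : forall i, Cn e i j.+1 = (Cn e i j + (x == i))%N by move=> i; rewrite CS.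
rewrite /Inv /=.
case T: (top e j).
- have Tx : forall i, (Cn e i j <= Cn e x j)%N by move=> i; move/forallP: T => /(_ i).
  case: ltnP => hab /=; split => [i|i i' nii'].
  + rewrite Cx; have := H1 i; case: eqP => _ /=; lia.
  + rewrite !Cx; case: (eqVneq x i) => [Exi|xi].
      rewrite -Exi in nii' *; have := H2 _ _ nii'; have := Tx i'; lia.
    case: (eqVneq x i') => [Exi'|xi'].
      rewrite -Exi' in nii' *; 
      have := H2 _ _ nii'; have := Tx i; lia.
     have := H2 _ _ nii'; lia.
  + rewrite Cx; have := H1 i; case: eqP => _ /=; lia.
  + rewrite !Cx; case: (eqVneq x i) => [Exi|xi].
      rewrite -Exi in nii' *;  have := H2 _ _ nii'; have := Tx i'; lia.
    case: (eqVneq x i') => [Exi'|xi'].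
      rewrite -Exi' in nii' *; 
      have := H2 _ _ nii'; have := Tx i; lia.
     have := H2 _ _ nii'; lia.
- move/negbT: T => /forallPn [i0]; rewrite -ltnNge -/x => hi0.
  have hxi0 : x != i0 by apply/eqP => E; move: hi0; rewrite -/x E ltnn.
  have P0 := H2 _ _ hxi0; have M0 := H1 i0.
  case: leqP => hab /=; split => [i|i i' nii'].
  + rewrite Cx; have := H1 i; case: eqP => [<-|_] /=; lia.
  + rewrite !Cx; case: (eqVneq x i) => [Exi|xi].
      rewrite -Exi in nii' *;  have := H2 _ _ nii'; lia.
    case: (eqVneq x i') => [Exi'|xi'].
      rewrite -Exi' in nii' *; 
      have := H2 _ _ nii'; lia.
     have := H2 _ _ nii'; lia.
  + rewrite Cx; have := H1 i; case: eqP => [<-|_] /=; lia.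
  + rewrite !Cx; case: (eqVneq x i) => [Exi|xi].
      rewrite -Exi in nii' *;  have := H2 _ _ nii'; lia.
    case: (eqVneq x i') => [Exi'|xi'].
      rewrite -Exi' in nii' *; 
      have := H2 _ _ nii'; lia.
     have := H2 _ _ nii'; lia.
Qed.

Local Open Scope ring_scope.

Lemma maxc_le k s (e : 'I_k.+1 -> 'I_s.+2) (j : 'I_k.+1) :
  (maxc e j <= maxc (e' e) j)%N.
Proof.
have [I1 I2] := inv_all e j.
have [S0 S1] := stC e (ltnW (ltn_ord j)).
have ne : (o1 s == o0 s) = false by apply/negbTE; apply/eqP => /(congr1 (@nat_of_ord _)); rewrite o0v o1v.
have ne' : (o0 s == o1 s) = false by rewrite eq_sym.
apply: (@leq_trans (if bit e j then (st e j).1 else (st e j).2)).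
  apply/bigmax_leqP => i hi.
  rewrite cnt_C CS inord_val eq_sym (negbTE hi) addn0.
  rewrite /bit; case T: (top e j).
    have Tx : (Cn e i j <= Cn e (e j) j)%N.
      by move/forallP: T => /(_ i); rewrite inord_val.
    have := I2 _ _ hi; rewrite (minn_idPl Tx); case: ltnP => /=; lia.
  have := I1 i; case: (leqP (st e j).2 (st e j).1) => /=; lia.
rewrite /maxc.
pose o := if bit e j then o0 s else o1 s.
have Ho : o != e' e j by rewrite /o /e'; case: (bit e j); rewrite ?ne ?ne'.
have L := @leq_bigmax_cond _ (fun i => i != e' e j) (fun i => cnt (e' e) i j) o Ho.
apply: leq_trans L; rewrite /= cnt_C CS inord_val eq_sym (negbTE Ho) addn0 /o.
by case: (bit e j); [rewrite S0 | rewrite S1].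
Qed.
Theorem lemma1 (R : realType) (k s d : nat) (alpha beta : R)
  (hk : (0 < k)%N) (hs : (0 < s)%N) (hd : (0 < d)%N)
  (ha : 0 <= alpha) (hb : 0 <= beta)
  (e : 'I_k -> 'I_s.+1) :
  exists e' : 'I_k -> 'I_s.+1,
    (forall j, (e' j < 2)%N) /\ Fstar d alpha beta e' <= Fstar d alpha beta e.
Proof.
case: k hk e => // k _ e; case: s hs e => // s _ e.
exists (e' e); split.
  by move=> j; rewrite /e'; case: bit; rewrite ?o0v ?o1v.
rewrite /Fstar; apply: ler_sum => j _.
have H := maxc_le e j.
rewrite le_min !ge_min lexx orbT andbT; apply/orP; left.
apply: ler_wpM2r => //; apply: lerB => //; by rewrite ler_nat.
Qed.
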